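(* Let $u^a_i,u^b_i\in[0,1]$ ($i\in[m]$) be the utilities of two agents $a,b$ for $m$ items, and suppose $\mathrm{OptEnvy}\le-\Delta$ for some $\Delta>0$. Then for all $c>0$, $\sum_{i=1}^m|cu^a_i-u^b_i|\ge(1+c)\Delta$.
   Context: Utilities are additive. An allocation is a partition $(\mathcal{A}_a,\mathcal{A}_b)$ of $[m]$; $\mathrm{Envy}_{a\to b}=\sum_{i\in\mathcal{A}_b}u^a_i-\sum_{i\in\mathcal{A}_a}u^a_i$, $\mathrm{Envy}_{b\to a}=\sum_{i\in\mathcal{A}_a}u^b_i-\sum_{i\in\mathcal{A}_b}u^b_i$, $\mathrm{Envy}=\max\{\mathrm{Envy}_{a\to b},\mathrm{Envy}_{b\to a}\}$, and $\mathrm{OptEnvy}=\min$ of $\mathrm{Envy}$ over all allocations. *)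

(* Defs.v *)
From mathcomp Require Import all_boot all_order all_algebra.
Set Implicit Arguments. Unset Strict Implicit. Unset Printing Implicit Defensive.
Import Order.TTheory GRing.Theory Num.Theory.
Local Open Scope ring_scope.

(* Two agents a, b; m items indexed by 'I_m; additive utilities ua, ub.
   An allocation (A_a, A_b) is a partition of [m]; we represent it by
   A := A_a : {set 'I_m}, with A_b := ~: A. *)
Definition envy_ab (R : realDomainType) (m : nat) (ua : 'I_m -> R) (A : {set 'I_m}) : R :=
  \sum_(i in ~: A) ua i - \sum_(i in A) ua i.
Definition envy_ba (R : realDomainType) (m : nat) (ub : 'I_m -> R) (A : {set 'I_m}) : R :=
  \sum_(i in A) ub i - \sum_(i in ~: A) ub i.
Definition envy (R : realDomainType) (m : nat) (ua ub : 'I_m -> R) (A : {set 'I_m}) : R :=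
  Num.max (envy_ab ua A) (envy_ba ub A).
(* Minimum of envy over all allocations (the seed envy set0 is itself one of
   the allocations, so this is exactly the minimum). *)
Definition optEnvy (R : realDomainType) (m : nat) (ua ub : 'I_m -> R) : R :=
  \big[Num.min/envy ua ub set0]_(A : {set 'I_m}) envy ua ub A.

(* Main.v *)
Require Import Defs.
From mathcomp Require Import all_boot all_order all_algebra.
From mathcomp Require Import lra.
Import Order.TTheory GRing.Theory Num.Theory.
Local Open Scope ring_scope.

Theorem lemma10 (R : realFieldType) (m : nat) (ua ub : 'I_m -> R) (Delta : R) :
  (forall i, 0 <= ua i <= 1) -> (forall i, 0 <= ub i <= 1) ->
  0 < Delta -> optEnvy ua ub <= - Delta ->
  forall c : R, 0 < c ->
    \sum_(i < m) `|c * ua i - ub i| >= (1 + c) * Delta.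
Proof.
move=> _ _ hD hopt c hc.
have [A hA] : exists A, optEnvy ua ub = envy ua ub A.
  rewrite /optEnvy; apply: (big_ind (fun x => exists A, x = envy ua ub A)).
  - by exists set0.
  - move=> x y [A ->] [B ->]; case: (leP (envy ua ub A) (envy ua ub B)) => _.
      by exists A.
    by exists B.
  - by move=> A _; exists A.
move: hopt; rewrite hA /envy ge_max => /andP [h1 h2].
move: h1 h2; rewrite /envy_ab /envy_ba.
have hC : forall f : 'I_m -> R, \sum_(i in ~: A) f i = \sum_(i < m | i \notin A) f i.
  by move=> f; apply: eq_bigl => i; rewrite in_setC.
rewrite !hC => h1 h2.
rewrite (bigID (fun i => i \in A)) /=.
have e1 : \sum_(i < m | i \in A) `|c * ua i - ub i| >= c * \sum_(i in A) ua i - \sum_(i in A) ub i.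
  rewrite mulr_sumr -sumrB; apply: ler_sum => i _; exact: ler_norm.
have e2 : \sum_(i < m | i \notin A) `|c * ua i - ub i| >= \sum_(i < m | i \notin A) ub i - c * \sum_(i < m | i \notin A) ua i.
  rewrite mulr_sumr -sumrB; apply: ler_sum => i _; rewrite -normrN opprB; exact: ler_norm.
set a1 := \sum_(i in A) ua i in h1 e1 *.
set a2 := \sum_(i < m | i \notin A) ua i in h1 e2 *.
set b1 := \sum_(i in A) ub i in h2 e1 *.
set b2 := \sum_(i < m | i \notin A) ub i in h2 e2 *.
have : c * Delta <= c * (a1 - a2) by rewrite ler_pM2l //; lra.
nra.
Qed.
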